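(* Let $\mathcal{H}$ be a complex Hilbert space and $T, S\in \mathcal{C}_2(\mathcal{H})$. Then: (i) $\big\|TT^* + T^*T\big\|_2 + \sup_{\varphi \in \mathbb{R}}\Big|{\rm tr}\big((e^{i\varphi}T)^2 + (e^{-i\varphi}T^* )^2\big)\Big| \leq 2\big(\|T\|^2_2 + |{\rm tr}(T^2)|\big)$; (ii) $\|TS\|^2_2 + \big|{\rm tr}\big((TS)^2\big)\big| \leq 4\min\Big\{\|T\|^2_2\big(\|S\|^2_2 + |{\rm tr}(S^2)|\big),\ \|S\|^2_2\big(\|T\|^2_2 + |{\rm tr}(T^2)|\big)\Big\}$.
   Context: $\mathcal{C}_2(\mathcal{H})$ denotes the class of Hilbert--Schmidt operators on $\mathcal{H}$, i.e. bounded operators $T$ with $\sum_i\|Te_i\|^2<\infty$ for an orthonormal basis $\{e_i\}$, with Hilbert--Schmidt norm $\|T\|_2=\big(\sum_i\|Te_i\|^2\big)^{1/2}$; ${\rm tr}$ denotes the trace. *)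

(* Defs.v *)
From HB Require Import structures.
From mathcomp Require Import all_boot all_order all_algebra.
From mathcomp Require Import all_classical all_reals.
From mathcomp Require Import ereal esum trigo.
From mathcomp Require Import complex.
Set Implicit Arguments. Unset Strict Implicit. Unset Printing Implicit Defensive.
Import Order.TTheory GRing.Theory Num.Theory.
Local Open Scope ring_scope.
Local Open Scope classical_set_scope.

Section HilbertSchmidt.
Variable R : realType.
Local Notation C := (R[i]).
Variable H : lmodType C.
Variable ip : H -> H -> C.   (* inner product, linear in the first argument *)

Definition cmod (z : C) : R := ComplexField.Normc.normc z.

Definition hnorm (x : H) : R := Num.sqrt (complex.Re (ip x x)).

Definition is_hilbert : Prop :=
  [/\ (forall a x y z, ip (a *: x + y) z = a * ip x z + ip y z),
      (forall x y, ip y x = conjc (ip x y)),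
      (forall x, complex.Im (ip x x) = 0 /\ 0 <= complex.Re (ip x x)),
      (forall x, ip x x = 0 -> x = 0) &
      (forall u : nat -> H,
         (forall eps : R, 0 < eps -> exists N : nat, forall m n : nat,
             (N <= m)%N -> (N <= n)%N -> hnorm (u m - u n) < eps) ->
         exists x : H, forall eps : R, 0 < eps -> exists N : nat,
             forall n : nat, (N <= n)%N -> hnorm (u n - x) < eps)].

Definition bounded_linear (T : H -> H) : Prop :=
  (forall (a : C) x y, T (a *: x + y) = a *: T x + T y) /\
  exists M : R, forall x, hnorm (T x) <= M * hnorm x.

Definition adjoint_of (T Ts : H -> H) : Prop :=
  forall x y, ip (T x) y = ip x (Ts y).

Definition orthonormal_basis (I : choiceType) (e : I -> H) : Prop :=
  (forall i j, ip (e i) (e j) = (if `[< i = j >] then 1 else 0)) /\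
  (forall x, (forall i, ip x (e i) = 0) -> x = 0).

Definition hs_sum2 (I : choiceType) (e : I -> H) (T : H -> H) : \bar R :=
  \esum_(i in [set: I]) ((hnorm (T (e i))) ^+ 2)%:E.

Definition is_HS (I : choiceType) (e : I -> H) (T : H -> H) : Prop :=
  (hs_sum2 e T < +oo)%E.

Definition hs_norm (I : choiceType) (e : I -> H) (T : H -> H) : R :=
  Num.sqrt (fine (hs_sum2 e T)).

(* unordered sum of a (absolutely summable) real family: positive part minus negative part *)
Definition rsum (I : choiceType) (f : I -> R) : R :=
  fine (\esum_(i in [set: I]) (Num.max (f i) 0)%:E) -
  fine (\esum_(i in [set: I]) (Num.max (- f i) 0)%:E).

Definition csum (I : choiceType) (f : I -> C) : C :=
  Complex (rsum (fun i => complex.Re (f i))) (rsum (fun i => complex.Im (f i))).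

Definition trace (I : choiceType) (e : I -> H) (A : H -> H) : C :=
  csum (fun i => ip (A (e i)) (e i)).

End HilbertSchmidt.

Definition expi (R : realType) (phi : R) : R[i] := Complex (cos phi) (sin phi).

(* Main.v *)
Require Import Defs.
From HB Require Import structures.
From mathcomp Require Import all_boot all_order all_algebra.
From mathcomp Require Import all_classical all_reals.
From mathcomp Require Import ereal esum trigo.
From mathcomp Require Import complex.
From mathcomp Require Import ring lra.
Import Order.TTheory GRing.Theory Num.Theory.
Local Open Scope ring_scope.
Local Open Scope classical_set_scope.

Module Aux.
Set Implicit Arguments. Unset Strict Implicit. Unset Printing Implicit Defensive.

Section Cplx.
Variable R : realType.
Local Notation C := (R[i]).
Lemma mulcJ (z : C) : z * conjc z = (cmod z ^+ 2)%:C%C.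
Proof.
case: z => a b; rewrite /cmod /= sqr_sqrtr ?addr_ge0 ?sqr_ge0 //.
apply/eqP; rewrite eq_complex /=; apply/andP; split; apply/eqP; ring.
Qed.
Lemma mulJc (z : C) : conjc z * z = (cmod z ^+ 2)%:C%C.
Proof. by rewrite mulrC mulcJ. Qed.
Lemma cmod_sqr (z : C) : cmod z ^+ 2 = complex.Re z ^+ 2 + complex.Im z ^+ 2.
Proof. by case: z => a b; rewrite /cmod /= sqr_sqrtr ?addr_ge0 ?sqr_ge0. Qed.
Lemma cmod_ge0 (z : C) : 0 <= cmod z.
Proof. by case: z => a b; rewrite /cmod /= sqrtr_ge0. Qed.
Lemma conjcD (x y : C) : conjc (x + y) = conjc x + conjc y.
Proof. exact: rmorphD. Qed.
Lemma conjcM (x y : C) : conjc (x * y) = conjc x * conjc y.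
Proof. exact: rmorphM. Qed.
Lemma conjcN (x : C) : conjc (- x) = - conjc x.
Proof. exact: rmorphN. Qed.
Lemma conjcK' (x : C) : conjc (conjc x) = x.
Proof. by case: x => a b /=; rewrite opprK. Qed.
Lemma conjcR (r : R) : conjc (r%:C%C) = r%:C%C.
Proof. by rewrite /= oppr0. Qed.
Lemma cmodJ (z : C) : cmod (conjc z) = cmod z.
Proof. by case: z => a b; rewrite /cmod /= sqrrN. Qed.
Lemma cmod0 : cmod (0 : C) = 0.
Proof. by rewrite /cmod /= expr0n /= addr0 sqrtr0. Qed.
Lemma cmodM (x y : C) : cmod (x * y) = cmod x * cmod y.
Proof. exact: ComplexField.Normc.normcM. Qed.
Lemma cmodN (x : C) : cmod (- x) = cmod x.
Proof. by case: x => a b; rewrite /cmod /= !sqrrN. Qed.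
Lemma absRe_le_cmod (z : C) : `|complex.Re z| <= cmod z.
Proof.
case: z => a b; rewrite /cmod /=.
rewrite -(@ler_pXn2r _ 2) // ?nnegrE ?sqrtr_ge0 // sqr_sqrtr ?addr_ge0 ?sqr_ge0 //.
by rewrite real_normK ?num_real // lerDl sqr_ge0.
Qed.
Lemma absIm_le_cmod (z : C) : `|complex.Im z| <= cmod z.
Proof.
case: z => a b; rewrite /cmod /=.
rewrite -(@ler_pXn2r _ 2) // ?nnegrE ?sqrtr_ge0 // sqr_sqrtr ?addr_ge0 ?sqr_ge0 //.
by rewrite real_normK ?num_real // lerDr sqr_ge0.
Qed.
Lemma Re_le_cmod (z : C) : complex.Re z <= cmod z.
Proof. exact: le_trans (ler_norm _) (absRe_le_cmod z). Qed.
Lemma cmod_le_ReIm (z : C) : cmod z <= `|complex.Re z| + `|complex.Im z|.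
Proof.
case: z => a b; rewrite /cmod /=.
rewrite -(@ler_pXn2r _ 2) // ?nnegrE ?sqrtr_ge0 ?addr_ge0 // sqr_sqrtr ?addr_ge0 ?sqr_ge0 //.
rewrite sqrrD !real_normK ?num_real // -addrA lerD2l lerDr.
by rewrite mulrn_wge0 // mulr_ge0.
Qed.
Lemma sqr_le (a b : R) : 0 <= b -> a ^+ 2 <= b ^+ 2 -> a <= b.
Proof. move=> b0 h; have [//|ba] := leP a b; nra. Qed.
Lemma cmodR (r : R) : 0 <= r -> cmod (r%:C%C) = r.
Proof. by move=> r0; rewrite /cmod /= expr0n /= addr0 sqrtr_sqr ger0_norm. Qed.
Lemma cmod_eq0 (z : C) : cmod z = 0 -> z = 0.
Proof. exact: ComplexField.Normc.eq0_normc. Qed.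
End Cplx.

Section Hilb.
Variable R : realType.
Local Notation C := (R[i]).
Variable H : lmodType C.
Variable ip : H -> H -> C.
Hypothesis hH : is_hilbert ip.
Local Notation N := (hnorm ip).

Lemma ipDZ a x y z : ip (a *: x + y) z = a * ip x z + ip y z.
Proof. by case: hH. Qed.
Lemma ipC x y : ip y x = conjc (ip x y).
Proof. by case: hH. Qed.
Lemma ipxx_pos x : complex.Im (ip x x) = 0 /\ 0 <= complex.Re (ip x x).
Proof. by case: hH. Qed.
Lemma ipxx_eq0 x : ip x x = 0 -> x = 0.
Proof. by case: hH => _ _ _ h _; apply: h. Qed.

Lemma ip0l z : ip 0 z = 0.
Proof.
have := ipDZ 1 0 0 z; rewrite scaler0 addr0 mul1r => h.
by apply: (@addrI _ (ip 0 z)); rewrite addr0 -h.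
Qed.
Lemma ipDl x y z : ip (x + y) z = ip x z + ip y z.
Proof. by rewrite -[x]scale1r ipDZ mul1r scale1r. Qed.
Lemma ipZl a x z : ip (a *: x) z = a * ip x z.
Proof. by rewrite -[a *: x]addr0 ipDZ ip0l addr0. Qed.
Lemma ipNl x z : ip (- x) z = - ip x z.
Proof. by rewrite -scaleN1r ipZl mulN1r. Qed.
Lemma ipBl x y z : ip (x - y) z = ip x z - ip y z.
Proof. by rewrite ipDl ipNl. Qed.
Lemma ipDr x y z : ip z (x + y) = ip z x + ip z y.
Proof. by rewrite ipC ipDl conjcD -!ipC. Qed.
Lemma ipZr a x z : ip z (a *: x) = conjc a * ip z x.
Proof. by rewrite ipC ipZl conjcM -ipC. Qed.
Lemma ip0r z : ip z 0 = 0.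
Proof. by rewrite ipC ip0l /= oppr0. Qed.
Lemma ipNr x z : ip z (- x) = - ip z x.
Proof. by rewrite ipC ipNl conjcN -ipC. Qed.
Lemma ipBr x y z : ip z (x - y) = ip z x - ip z y.
Proof. by rewrite ipDr ipNr. Qed.
Lemma ip_suml (J : Type) (s : seq J) (f : J -> H) z :
  ip (\sum_(j <- s) f j) z = \sum_(j <- s) ip (f j) z.
Proof. exact: (big_morph (fun x => ip x z) (fun x y => ipDl x y z) (ip0l z)). Qed.
Lemma ip_sumr (J : Type) (s : seq J) (f : J -> H) z :
  ip z (\sum_(j <- s) f j) = \sum_(j <- s) ip z (f j).
Proof. exact: (big_morph (fun x => ip z x) (fun x y => ipDr x y z) (ip0r z)). Qed.

Lemma N_ge0 x : 0 <= N x.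
Proof. exact: sqrtr_ge0. Qed.
Lemma N_sqr x : N x ^+ 2 = complex.Re (ip x x).
Proof. by rewrite /hnorm sqr_sqrtr //; case: (ipxx_pos x). Qed.
Lemma ipxx x : ip x x = (N x ^+ 2)%:C%C.
Proof.
rewrite N_sqr; move: (ipxx_pos x); case: (ip x x) => a b /= [-> _] //.
Qed.
Lemma N_from_sqr y r : 0 <= r -> ip y y = (r ^+ 2)%:C%C -> N y = r.
Proof. by move=> r0 h; rewrite /hnorm h /= sqrtr_sqr ger0_norm. Qed.
Lemma N0 : N 0 = 0.
Proof. by apply: N_from_sqr => //; rewrite ip0l expr0n. Qed.
Lemma N_eq0 x : N x = 0 -> x = 0.
Proof. by move=> h; apply: ipxx_eq0; rewrite ipxx h expr0n. Qed.
Lemma NZ a x : N (a *: x) = cmod a * N x.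
Proof.
apply: N_from_sqr; first by rewrite mulr_ge0 ?cmod_ge0 ?N_ge0.
rewrite ipZl ipZr mulrA mulcJ ipxx -rmorphM /= exprMn.
by [].
Qed.
Lemma NN x : N (- x) = N x.
Proof.
by rewrite -scaleN1r NZ cmodN (_ : cmod 1 = 1) ?mul1r // (@cmodR R 1 ler01).
Qed.
Lemma NB x y : N (x - y) = N (y - x).
Proof. by rewrite -NN opprB. Qed.

Lemma CS_sqr x y : cmod (ip x y) ^+ 2 <= N x ^+ 2 * N y ^+ 2.
Proof.
have [y0|ny0] := eqVneq (N y) 0.
  by rewrite (N_eq0 y0) ip0r cmod0 expr0n /= mulr_ge0 ?sqr_ge0.
set r := N y ^+ 2; set c := ip x y.
have r0 : 0 < r by rewrite exprn_gt0 // lt_def ny0 N_ge0.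
pose v := r%:C%C *: x - c *: y.
have hyv : ip y v = 0.
  rewrite /v ipBr !ipZr ipxx conjcR -/r (ipC x y) -/c.
  by rewrite mulrC subrr.
have hv : ip v v = (r * (r * N x ^+ 2 - cmod c ^+ 2))%:C%C.
  rewrite {1}/v ipBl !ipZl hyv mulr0 subr0 /v ipBr !ipZr conjcR ipxx -/c.
  rewrite mulJc.
  apply/eqP; rewrite eq_complex /=; apply/andP; split; apply/eqP; ring.
have := sqr_ge0 (N v); rewrite (N_sqr v) hv /=.
by rewrite pmulr_rge0 // subr_ge0 => h; rewrite mulrC.
Qed.
Lemma CS x y : cmod (ip x y) <= N x * N y.
Proof.
by apply: sqr_le; rewrite ?mulr_ge0 ?N_ge0 // exprMn CS_sqr.
Qed.
Lemma ND x y : N (x + y) <= N x + N y.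
Proof.
have h : N (x + y) ^+ 2 <= (N x + N y) ^+ 2.
  rewrite (N_sqr (x + y)) ipDl !ipDr (ipC x y) !ipxx.
  have := Re_le_cmod (ip x y); have := CS x y.
  case: (ip x y) => a b /= h1 h2.
  nra.
by apply: sqr_le; rewrite ?addr_ge0 ?N_ge0.
Qed.

Lemma N_sum (J : Type) (s : seq J) (f : J -> H) :
  N (\sum_(j <- s) f j) <= \sum_(j <- s) N (f j).
Proof.
elim: s => [|j s IH]; first by rewrite !big_nil N0.
by rewrite !big_cons (le_trans (ND _ _)) // lerD2l.
Qed.

Lemma Pyth2 u v : ip u v = 0 -> N (u + v) ^+ 2 = N u ^+ 2 + N v ^+ 2.
Proof.
move=> h; rewrite (N_sqr (u + v)) ipDl !ipDr (ipC u v) h !ipxx /=.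
by rewrite addr0 add0r.
Qed.

Variable I : choiceType.
Variable e : I -> H.
Hypothesis he : orthonormal_basis ip e.

Lemma ipee i j : ip (e i) (e j) = if i == j then 1 else 0.
Proof.
have := he.1 i j; case: eqVneq => [->|nij]; first by rewrite asboolT.
by rewrite asboolF //; apply/eqP.
Qed.

Lemma ip_sum_e (s : seq I) (d : I -> C) k : uniq s ->
  ip (\sum_(i <- s) d i *: e i) (e k) = if k \in s then d k else 0.
Proof.
rewrite ip_suml; elim: s => [|j s IH] /=; first by rewrite big_nil.
move=> /andP[js us]; rewrite big_cons IH // ipZl ipee in_cons.
case: (eqVneq j k) => [ejk|njk].
  by subst k; rewrite (negPf js) mulr1 addr0.
by rewrite mulr0 add0r.
Qed.

Lemma ip_sum_sum (s : seq I) (d c : I -> C) : uniq s ->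
  ip (\sum_(i <- s) d i *: e i) (\sum_(j <- s) c j *: e j)
  = \sum_(j <- s) d j * conjc (c j).
Proof.
move=> us; rewrite ip_sumr; apply: eq_big_seq => j js.
by rewrite ipZr ip_sum_e // js mulrC.
Qed.

Lemma Re_sum (J : Type) (s : seq J) (f : J -> C) :
  complex.Re (\sum_(j <- s) f j) = \sum_(j <- s) complex.Re (f j).
Proof.
elim: s => [|j s IH]; first by rewrite !big_nil.
by rewrite !big_cons -IH; case: (f j); case: (\sum_(j <- s) f j).
Qed.
Lemma Im_sum (J : Type) (s : seq J) (f : J -> C) :
  complex.Im (\sum_(j <- s) f j) = \sum_(j <- s) complex.Im (f j).
Proof.
elim: s => [|j s IH]; first by rewrite !big_nil.
by rewrite !big_cons -IH; case: (f j); case: (\sum_(j <- s) f j).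
Qed.

Lemma N_sum_sqr (s : seq I) (d : I -> C) : uniq s ->
  N (\sum_(i <- s) d i *: e i) ^+ 2 = \sum_(i <- s) cmod (d i) ^+ 2.
Proof.
move=> us; rewrite N_sqr ip_sum_sum // Re_sum; apply: eq_bigr => i _.
by rewrite mulcJ.
Qed.

Definition P (s : seq I) x := \sum_(i <- s) ip x (e i) *: e i.
Definition a x i := cmod (ip x (e i)) ^+ 2.

Lemma a_ge0 x i : 0 <= a x i.
Proof. exact: sqr_ge0. Qed.

Lemma ip_P_e s x k : uniq s -> k \in s -> ip (P s x) (e k) = ip x (e k).
Proof. by move=> us ks; rewrite ip_sum_e // ks. Qed.

Lemma ip_res_e s x k : uniq s -> k \in s -> ip (x - P s x) (e k) = 0.
Proof. by move=> us ks; rewrite ipBl ip_P_e // subrr. Qed.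

Lemma Pyth s x : uniq s -> N x ^+ 2 = N (x - P s x) ^+ 2 + \sum_(i <- s) a x i.
Proof.
move=> us; have h : ip (x - P s x) (P s x) = 0.
  rewrite ip_sumr big_seq big1 // => j js.
  by rewrite ipZr ip_res_e // mulr0.
by have := Pyth2 h; rewrite subrK => ->; rewrite N_sum_sqr.
Qed.

Lemma Bessel s x : uniq s -> \sum_(i <- s) a x i <= N x ^+ 2.
Proof. by move=> us; rewrite (Pyth x us) lerDr sqr_ge0. Qed.

Lemma N_P s x : uniq s -> N (P s x) ^+ 2 = \sum_(i <- s) a x i.
Proof. by move=> us; rewrite N_sum_sqr. Qed.

Lemma a_P s x k : uniq s -> k \in s -> a (P s x) k = a x k.
Proof. by move=> us ks; rewrite /a ip_P_e. Qed.

Lemma cmod_ip_e x k : cmod (ip x (e k)) <= N x.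
Proof.
apply: le_trans (CS _ _) _.
have -> : N (e k) = 1.
  by apply: N_from_sqr => //; rewrite ipee eqxx expr1n.
by rewrite mulr1.
Qed.

End Hilb.

Section FCS.
Variable R : realType.
Lemma fCS (J : Type) (s : seq J) (f g : J -> R) :
  \sum_(i <- s) f i * g i <=
  Num.sqrt (\sum_(i <- s) f i ^+ 2) * Num.sqrt (\sum_(i <- s) g i ^+ 2).
Proof.
set A := \sum_(i <- s) f i ^+ 2; set B := \sum_(i <- s) g i ^+ 2.
set Cc := \sum_(i <- s) f i * g i.
have A0 : 0 <= A by apply: sumr_ge0 => i _; apply: sqr_ge0.
have B0 : 0 <= B by apply: sumr_ge0 => i _; apply: sqr_ge0.
have E : forall (F G K : J -> R) (x y z : R),
    \sum_(i <- s) (F i * x + G i * y - K i * z) =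
    (\sum_(i <- s) F i) * x + (\sum_(i <- s) G i) * y - (\sum_(i <- s) K i) * z.
  by move=> F G K x y z; rewrite big_split big_split /= sumrN -!mulr_suml.
have key : 0 <= 2 * (A * B - Cc ^+ 2).
  have -> : 2 * (A * B - Cc ^+ 2) =
      \sum_(i <- s) \sum_(j <- s) (f i * g j - f j * g i) ^+ 2.
    transitivity (\sum_(i <- s) (f i ^+ 2 * B + g i ^+ 2 * A - (f i * g i) * (2 * Cc))).
      by rewrite E -/A -/B -/Cc; ring.
    apply: eq_bigr => i _.
    transitivity (\sum_(j <- s) (g j ^+ 2 * f i ^+ 2 + f j ^+ 2 * g i ^+ 2
                                   - (f j * g j) * (2 * (f i * g i)))).
      by rewrite E -/A -/B -/Cc; ring.
    by apply: eq_bigr => j _; ring.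
  by apply: sumr_ge0 => i _; apply: sumr_ge0 => j _; apply: sqr_ge0.
apply: sqr_le; first by rewrite mulr_ge0 ?sqrtr_ge0.
by rewrite exprMn !sqr_sqrtr //; nra.
Qed.
End FCS.


Section Esum.
Variable R : realType.
Variable I : choiceType.
Implicit Types f g h : I -> R.

Definition Es f : \bar R := \esum_(i in [set: I]) (f i)%:E.

Lemma Es_ge f (s : seq I) : uniq s -> ((\sum_(i <- s) f i)%:E <= Es f)%E.
Proof.
move=> us; apply: esum_ge; exists [set` s]; first by split => //; apply: finite_seq.
by rewrite -fsbig_seq // sumEFin.
Qed.

Lemma Es_le f (B : R) : (forall s : seq I, uniq s -> \sum_(i <- s) f i <= B) ->
  (Es f <= B%:E)%E.
Proof.
move=> hB; apply: ge_ereal_sup => _ [X [finX _] <-].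
by rewrite fsbig_finite // sumEFin lee_fin hB // finmap.fset_uniq.
Qed.

Lemma Es_ge0 f : (forall i, 0 <= f i) -> (0 <= Es f)%E.
Proof. by move=> f0; apply: esum_ge0 => i _; rewrite lee_fin. Qed.

Lemma Es_fin f (B : R) : (forall i, 0 <= f i) -> (Es f <= B%:E)%E ->
  Es f = (fine (Es f))%:E.
Proof.
move=> f0 hB; rewrite fineK // ge0_fin_numE ?Es_ge0 //.
by apply: le_lt_trans hB _; rewrite ltry.
Qed.

Lemma Es_sum_le f (S : R) (s : seq I) : Es f = S%:E -> uniq s ->
  \sum_(i <- s) f i <= S.
Proof. by move=> hS us; rewrite -lee_fin -hS Es_ge. Qed.

Lemma Es_approx f (S : R) (eps : R) : Es f = S%:E -> 0 < eps ->
  exists s : seq I, uniq s /\ S - eps < \sum_(i <- s) f i.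
Proof.
move=> hS e0.
have : ((S - eps)%:E < Es f)%E by rewrite hS lte_fin ltrBlDr ltrDl.
move=> /ereal_sup_gt [_ [X [finX _] <-]].
rewrite fsbig_finite // sumEFin lte_fin => h.
by exists (finmap.enum_fset (fset_set X)); split => //; apply: finmap.fset_uniq.
Qed.

Lemma Es_eq f (S : R) : (forall i, 0 <= f i) ->
  (forall s : seq I, uniq s -> \sum_(i <- s) f i <= S) ->
  (forall eps, 0 < eps -> exists s : seq I, uniq s /\ S - eps < \sum_(i <- s) f i) ->
  Es f = S%:E.
Proof.
move=> f0 hle hap.
have hB := Es_le hle.
rewrite (Es_fin f0 hB); congr (_%:E); apply/eqP; rewrite eq_le.
rewrite -lee_fin -(Es_fin f0 hB) hB /=.
apply/ler_addgt0Pr => eps e0.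
have [s [us hs]] := hap eps e0.
rewrite -lerBlDr; apply: (le_trans (ltW hs)).
by rewrite -lee_fin -(Es_fin f0 hB) Es_ge.
Qed.

Lemma Es_mono f g (B : R) : (forall i, 0 <= f i) -> (forall i, f i <= g i) ->
  (Es g <= B%:E)%E -> (Es f <= B%:E)%E.
Proof.
move=> f0 fg hB; apply: le_trans hB; apply: le_esum => i _; by rewrite lee_fin.
Qed.

Lemma EsZ f (c B : R) : 0 <= c -> (forall i, 0 <= f i) -> (Es f <= B%:E)%E ->
  Es (fun i => c * f i) = (c * fine (Es f))%:E.
Proof.
move=> c0 f0 hB; have hS := Es_fin f0 hB; set S := fine (Es f) in hS *.
apply: Es_eq.
- by move=> i; rewrite mulr_ge0.
- by move=> s us; rewrite -mulr_sumr ler_wpM2l // (Es_sum_le hS).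
- move=> eps e0.
  have [->|cn0] := eqVneq c 0.
    by exists [::]; split => //; rewrite big_nil mul0r subr_lt0.
  have cp : 0 < c by rewrite lt_def cn0.
  have [s [us hs]] := Es_approx hS (divr_gt0 e0 cp).
  exists s; split => //; rewrite -mulr_sumr.
  rewrite -(ltr_pM2l cp) mulrBr mulrCA divff ?mulr1 // in hs.
Qed.

Lemma EsD f g : (forall i, 0 <= f i) -> (forall i, 0 <= g i) ->
  Es (fun i => f i + g i) = (Es f + Es g)%E.
Proof.
move=> f0 g0; rewrite /Es -esumD //; last by move=> i _; rewrite lee_fin.
by move=> i _; rewrite lee_fin.
Qed.

Lemma EsD_fin f g (A B : R) : (forall i, 0 <= f i) -> (forall i, 0 <= g i) ->
  (Es f <= A%:E)%E -> (Es g <= B%:E)%E ->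
  Es (fun i => f i + g i) = (fine (Es f) + fine (Es g))%:E.
Proof.
move=> f0 g0 hA hB; rewrite EsD // (Es_fin f0 hA) (Es_fin g0 hB) /=.
by [].
Qed.

Lemma fine_Es_le f (B : R) : (forall i, 0 <= f i) -> (Es f <= B%:E)%E ->
  fine (Es f) <= B.
Proof. by move=> f0 hB; rewrite -lee_fin -(Es_fin f0 hB). Qed.

Lemma fine_Es_ge0 f : (forall i, 0 <= f i) -> 0 <= fine (Es f).
Proof. by move=> f0; apply: fine_ge0; apply: Es_ge0. Qed.

Definition pos g i := Num.max (g i) 0.
Definition neg g i := Num.max (- g i) 0.
Lemma pos_ge0 g i : 0 <= pos g i. Proof. by rewrite /pos le_max lexx orbT. Qed.
Lemma neg_ge0 g i : 0 <= neg g i. Proof. by rewrite /neg le_max lexx orbT. Qed.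
Lemma pos_neg g i : pos g i + neg g i = `|g i|.
Proof.
rewrite /pos /neg; have [g0|g0] := leP 0 (g i).
  by rewrite max_r ?oppr_le0 // addr0 ger0_norm.
by rewrite max_l ?oppr_ge0 ?ltW // add0r ltr0_norm.
Qed.
Lemma pos_subneg g i : pos g i - neg g i = g i.
Proof.
rewrite /pos /neg; have [g0|g0] := leP 0 (g i).
  by rewrite max_r ?oppr_le0 // subr0.
by rewrite max_l ?oppr_ge0 ?ltW // sub0r opprK.
Qed.

Lemma rsumE g : rsum g = fine (Es (pos g)) - fine (Es (neg g)).
Proof. by []. Qed.

Lemma Es_abs_fin g (B : R) : (Es (fun i => `|g i|%R) <= B%:E)%E ->
  (Es (pos g) <= B%:E)%E /\ (Es (neg g) <= B%:E)%E.
Proof.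
move=> hB; split.
- by apply: (Es_mono _ _ hB) => // [i|i]; rewrite ?pos_ge0 // -pos_neg lerDl neg_ge0.
- by apply: (Es_mono _ _ hB) => // [i|i]; rewrite ?neg_ge0 // -pos_neg lerDr pos_ge0.
Qed.

Lemma rsum_bound g (B : R) : (Es (fun i => `|g i|%R) <= B%:E)%E -> `|rsum g| <= B.
Proof.
move=> hB; rewrite rsumE.
have [gp gn] := Es_abs_fin hB.
have hpn := EsD_fin (pos_ge0 g) (neg_ge0 g) gp gn.
have := fine_Es_ge0 (pos_ge0 g); have := fine_Es_ge0 (neg_ge0 g).
have : fine (Es (pos g)) + fine (Es (neg g)) <= B.
  rewrite -lee_fin -hpn; apply: le_trans hB; apply: le_esum => i _.
  by rewrite pos_neg.
set p := fine _; set n := fine _ => h1 h2 h3.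
rewrite ler_norml; apply/andP; split; lra.
Qed.

Lemma rsumD g h (A B : R) : (Es (fun i => `|g i|%R) <= A%:E)%E ->
  (Es (fun i => `|h i|%R) <= B%:E)%E ->
  rsum (fun i => g i + h i) = rsum g + rsum h.
Proof.
move=> hA hB; rewrite !rsumE.
have [gp gn] := Es_abs_fin hA; have [hp hn] := Es_abs_fin hB.
set gh := fun i => g i + h i.
have hAB : (Es (fun i => `|gh i|%R) <= (A + B)%:E)%E.
  apply: (Es_mono (g := fun i => `|g i| + `|h i|)) => [i|i|].
  - exact: normr_ge0.
  - exact: ler_normD.
  by rewrite EsD // EFinD leeD.
have [ghp ghn] := Es_abs_fin hAB.
have E : forall i, pos gh i + (neg g i + neg h i) = neg gh i + (pos g i + pos h i).
  move=> i; have := pos_subneg gh i; have := pos_subneg g i; have := pos_subneg h i.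
  rewrite /gh; lra.
have := congr1 Es (funext E).
have n2 : forall i, 0 <= neg g i + neg h i by move=> i; rewrite addr_ge0 // neg_ge0.
have p2 : forall i, 0 <= pos g i + pos h i by move=> i; rewrite addr_ge0 // pos_ge0.
rewrite (EsD (pos_ge0 gh) n2) (EsD (neg_ge0 gh) p2).
rewrite (EsD_fin (neg_ge0 g) (neg_ge0 h) gn hn).
rewrite (EsD_fin (pos_ge0 g) (pos_ge0 h) gp hp).
rewrite (Es_fin (pos_ge0 gh) ghp) (Es_fin (neg_ge0 gh) ghn) -!EFinD => -[].
lra.
Qed.

Lemma rsumN g : rsum (fun i => - g i) = - rsum g.
Proof.
rewrite !rsumE.
have -> : pos (fun i => - g i) = neg g by [].
have -> : neg (fun i => - g i) = pos g by apply: funext => i; rewrite /neg /pos opprK.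
by rewrite opprB.
Qed.

Lemma rsumZ g (c B : R) : 0 <= c -> (Es (fun i => `|g i|%R) <= B%:E)%E ->
  rsum (fun i => c * g i) = c * rsum g.
Proof.
move=> c0 hB; have [gp gn] := Es_abs_fin hB; rewrite !rsumE.
have -> : pos (fun i => c * g i) = (fun i => c * pos g i).
  by apply: funext => i; rewrite /pos maxr_pMr // mulr0.
have -> : neg (fun i => c * g i) = (fun i => c * neg g i).
  by apply: funext => i; rewrite /neg -mulrN maxr_pMr // mulr0.
by rewrite (EsZ c0 (pos_ge0 g) gp) (EsZ c0 (neg_ge0 g) gn) /= mulrBr.
Qed.

Lemma rsumZ' g (c B : R) : (Es (fun i => `|g i|%R) <= B%:E)%E ->
  rsum (fun i => c * g i) = c * rsum g.
Proof.
move=> hB; have [c0|c0] := leP 0 c; first exact: rsumZ hB.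
have -> : (fun i => c * g i) = (fun i => - ((- c) * g i)).
  by apply: funext => i; rewrite mulNr opprK.
by rewrite rsumN (rsumZ _ hB) ?oppr_ge0 ?ltW // mulNr opprK.
Qed.

Lemma Es_abs_Z g (c B : R) : (Es (fun i => `|g i|%R) <= B%:E)%E ->
  (Es (fun i => `|c * g i|%R) <= (`|c| * B)%:E)%E.
Proof.
move=> hB; under eq_fun do rewrite normrM.
rewrite (EsZ (normr_ge0 c) (fun i => normr_ge0 (g i)) hB) lee_fin ler_wpM2l //.
by apply: fine_Es_le hB => i; apply: normr_ge0.
Qed.

Lemma rsum_lin g h (c d A B : R) : (Es (fun i => `|g i|%R) <= A%:E)%E ->
  (Es (fun i => `|h i|%R) <= B%:E)%E ->
  rsum (fun i => c * g i + d * h i) = c * rsum g + d * rsum h.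
Proof.
move=> hA hB.
rewrite (rsumD (Es_abs_Z c hA) (Es_abs_Z d hB)).
by rewrite (rsumZ' _ hA) (rsumZ' _ hB).
Qed.

Lemma rsum0 : rsum (fun _ : I => (0 : R)) = 0.
Proof.
rewrite rsumE /Es /pos /neg oppr0 maxxx.
by rewrite esum1 // subrr.
Qed.

End Esum.


Lemma invS_small (R : realType) (eps : R) : 0 < eps ->
  exists N0 : nat, forall n, (N0 <= n)%N -> (n.+1%:R)^-1 < eps.
Proof.
move=> e0; exists (Num.trunc (eps^-1)) => n hn.
have h1 := truncnS_gt (eps^-1).
rewrite invf_plt ?posrE ?ltr0n //.
apply: lt_le_trans h1 _; rewrite ler_nat; exact: hn.
Qed.

Lemma sqr_lt (R : realType) (t eps : R) : 0 <= t -> 0 <= eps -> t ^+ 2 < eps ^+ 2 -> t < eps.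
Proof. move=> t0 e0 h; have [//|et] := ltP t eps; nra. Qed.

Section Pars.
Variable R : realType.
Local Notation C := (R[i]).
Variable H : lmodType C.
Variable ip : H -> H -> C.
Hypothesis hH : is_hilbert ip.
Local Notation N := (hnorm ip).
Variable I : choiceType.
Variable e : I -> H.
Hypothesis he : orthonormal_basis ip e.
Local Notation a := (a ip e).
Local Notation P := (P ip e).

Lemma P_P s t x : uniq s -> uniq t -> {subset s <= t} -> P s (P t x) = P s x.
Proof.
move=> us ut st; apply: eq_big_seq => i iS.
by rewrite (ip_P_e hH he) // st.
Qed.

Lemma sum_a_mono s t x : uniq s -> uniq t -> {subset s <= t} ->
  \sum_(i <- s) a x i <= \sum_(i <- t) a x i.
Proof.
move=> us ut st.
have -> : \sum_(i <- s) a x i = \sum_(i <- s) a (P t x) i.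
  by apply: eq_big_seq => i iS; rewrite (a_P hH he) // st.
by rewrite -(N_P hH he x ut) (Bessel hH he).
Qed.

Lemma Es_a_le x : (Es (a x) <= (N x ^+ 2)%:E)%E.
Proof. by apply: Es_le => s us; apply: Bessel. Qed.

Lemma completeness (u : nat -> H) :
  (forall eps : R, 0 < eps -> exists M : nat, forall m n : nat,
      (M <= m)%N -> (M <= n)%N -> N (u m - u n) < eps) ->
  exists y : H, forall eps : R, 0 < eps -> exists M : nat,
      forall n : nat, (M <= n)%N -> N (u n - y) < eps.
Proof. by case: hH => _ _ _ _ h; apply: h. Qed.

Lemma Parseval x : Es (a x) = (N x ^+ 2)%:E.
Proof.
have a0 := a_ge0 ip e x.
have hB := Es_a_le x.
have hS := Es_fin a0 hB; set S := fine (Es (a x)) in hS *.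
have SN : S <= N x ^+ 2 by rewrite -lee_fin -hS.
rewrite hS; congr (_%:E); apply/eqP; rewrite eq_le SN /=.
have /choice [G HG] : forall n : nat, exists s : seq I,
    uniq s /\ S - (n.+1%:R)^-1 < \sum_(i <- s) a x i.
  by move=> n; apply: Es_approx hS _; rewrite invr_gt0 ltr0n.
pose F n := undup (flatten [seq G k | k <- iota 0 n.+1]).
have uF n : uniq (F n) by apply: undup_uniq.
have memF n i : (i \in F n) = [exists k : 'I_n.+1, i \in G k].
  rewrite mem_undup; apply/flatten_mapP/existsP => [[k]|[k kin]].
    by rewrite mem_iota add0n => /andP[_ kn] ik; exists (Ordinal kn).
  by exists (nat_of_ord k) => //; rewrite mem_iota add0n ltn_ord.
have FG n : {subset G n <= F n}.
  by move=> i ig; rewrite memF; apply/existsP; exists ord_max.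
have Fmono n m : (n <= m)%N -> {subset F n <= F m}.
  move=> nm i; rewrite !memF => /existsP[k ik]; apply/existsP.
  have km : (k < m.+1)%N by apply: leq_trans (ltn_ord k) _.
  by exists (Ordinal km).
have SF n : S - (n.+1%:R)^-1 < \sum_(i <- F n) a x i.
  have [uG hG] := HG n; apply: lt_le_trans hG _.
  exact: sum_a_mono.
have FS n : \sum_(i <- F n) a x i <= S by apply: Es_sum_le hS _.
pose u n := P (F n) x.
have Cau n m : (n <= m)%N -> N (u m - u n) ^+ 2 <= (n.+1%:R)^-1.
  move=> nm; have := Pyth hH he (u m) (uF n).
  rewrite (P_P _ (uF n) (uF m) (Fmono n m nm)) -/(u n).
  rewrite (N_P hH he x (uF m)).
  have -> : \sum_(i <- F n) a (u m) i = \sum_(i <- F n) a x i.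
    by apply: eq_big_seq => i iF; rewrite (a_P hH he) // (Fmono n m nm).
  move=> h; have := SF n; have := FS m; move: h.
  move: (N (u m - u n) ^+ 2) (\sum_(i <- F m) a x i) (\sum_(i <- F n) a x i) (n.+1%:R^-1) => t p q r; lra.
have [y hy] : exists y : H, forall eps : R, 0 < eps -> exists M : nat,
      forall n : nat, (M <= n)%N -> N (u n - y) < eps.
  apply: completeness => eps e0.
  have [M hM] := invS_small (mulr_gt0 e0 e0).
  exists M => m n Mm Mn.
  have key : forall p q, (M <= p)%N -> (p <= q)%N -> N (u q - u p) < eps.
    move=> p q Mp pq; have := Cau p q pq; have := hM p Mp.
    move=> h1 h2; have h3 : N (u q - u p) ^+ 2 < eps ^+ 2.
      by rewrite expr2; apply: le_lt_trans h2 h1.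
    by apply: sqr_lt h3; rewrite ?N_ge0 ?ltW.
  have [nm|mn] := leqP n m; first exact: key Mn nm.
  by rewrite (NB hH); apply: (key m n Mm); apply: ltnW.
have ortho k : ip (x - y) (e k) = 0.
  have [n0 hn0] : exists n0 : nat, forall n, (n0 <= n)%N -> ip (x - u n) (e k) = 0.
    have [[n0 kn0]|nk] := pselect (exists n, k \in F n).
      exists n0 => n hn; apply: (ip_res_e hH he) => //.
      exact: Fmono hn _ kn0.
    have xk : ip x (e k) = 0.
      have ak0 : a x k = 0.
        apply/eqP; rewrite eq_le a0 andbT leNgt; apply/negP => ak.
        have [n hn] := invS_small ak.
        have knF : k \notin F n by apply/negP => kF; apply: nk; exists n.
        have := Es_sum_le hS (s := k :: F n); rewrite /= knF uF big_cons.
        move=> /(_ isT); have := SF n; have := hn n (leqnn n).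
        move: (a x k) (\sum_(i <- F n) a x i) (n.+1%:R^-1) => t p q; lra.
      apply: cmod_eq0; apply/eqP; rewrite -sqrf_eq0; apply/eqP; exact: ak0.
    exists 0%N => n _; rewrite (ipBl hH) xk /u /P (ip_sum_e hH he) // xk.
    by case: ifP; rewrite subrr.
  apply: cmod_eq0; apply/eqP; rewrite eq_le cmod_ge0 andbT.
  apply/ler_addgt0Pr => eps e0; rewrite add0r.
  have [M hM] := hy eps e0.
  have hn : (n0 <= maxn n0 M)%N by apply: leq_maxl.
  have hM' : (M <= maxn n0 M)%N by apply: leq_maxr.
  have -> : x - y = (x - u (maxn n0 M)) + (u (maxn n0 M) - y).
    by rewrite addrA subrK.
  rewrite (ipDl hH) hn0 // add0r.
  apply: le_trans (cmod_ip_e hH he _ _) _.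
  exact: ltW (hM _ hM').
have xy : x = y.
  by apply/eqP; rewrite -subr_eq0; apply/eqP; apply: he.2 => k; apply: ortho.
apply/ler_addgt0Pr => eps e0.
have se0 : 0 < Num.sqrt eps by rewrite sqrtr_gt0.
have [M hM] := hy _ se0.
have := Pyth hH he x (uF M); rewrite -/(u M) {2}xy (NB hH).
have := hM M (leqnn M); have := FS M.
have := N_ge0 ip (u M - y); have := sqr_sqrtr (ltW e0).
have := sqrtr_ge0 eps.
move=> h0 h1 h2 h3 h4 h5.
have h6 : N (u M - y) ^+ 2 <= eps.
  rewrite -h1; apply: ltW; rewrite !expr2; nra.
lra.
Qed.

End Pars.


Lemma esum_swap (R : realType) (I : choiceType) (f : I -> I -> \bar R) :
  (forall i j, (0 <= f i j)%E) ->
  \esum_(i in [set: I]) \esum_(j in [set: I]) f i j =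
  \esum_(j in [set: I]) \esum_(i in [set: I]) f i j.
Proof.
move=> f0.
rewrite (esum_esum (I := [set: I]) (J := fun _ => [set: I]) (a := f)) //.
rewrite (esum_esum (I := [set: I]) (J := fun _ => [set: I]) (a := fun j i => f i j)) //.
have -> : [set: I] `*`` (fun _ => [set: I]) = [set: I * I].
  by apply/seteqP; split.
have hb : set_bij [set: I * I] [set: I * I] (fun k : I * I => (k.2, k.1)).
  rewrite setTT_bijective; exists (fun k : I * I => (k.2, k.1)); by case.
by rewrite (reindex_esum _ _ _ (fun k : I * I => f k.1 k.2) hb).
Qed.

Section Ops.
Variable R : realType.
Local Notation C := (R[i]).
Variable H : lmodType C.
Variable ip : H -> H -> C.
Hypothesis hH : is_hilbert ip.
Local Notation N := (hnorm ip).
Variable I : choiceType.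
Variable e : I -> H.
Hypothesis he : orthonormal_basis ip e.
Local Notation a := (a ip e).
Local Notation P := (P ip e).

Lemma approx x eps : 0 < eps -> exists s : seq I, uniq s /\ N (x - P s x) < eps.
Proof.
move=> e0; have [s [us hs]] := Es_approx (Parseval hH he x) (mulr_gt0 e0 e0).
exists s; split => //; have := Pyth hH he x us.
move=> h; apply: sqr_lt; rewrite ?N_ge0 ?ltW //.
move: hs; rewrite h expr2.
move: (N (x - P s x) ^+ 2) (\sum_(i <- s) a x i) => t p; lra.
Qed.

Section Lin.
Variable A : H -> H.
Hypothesis hA : bounded_linear ip A.

Lemma lin_DZ c x y : A (c *: x + y) = c *: A x + A y.
Proof. by case: hA. Qed.
Lemma lin0 : A 0 = 0.
Proof.
have := lin_DZ 1 0 0; rewrite scaler0 addr0 scale1r.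
by move=> /(congr1 (fun z => z - A 0)); rewrite subrr addrK => /esym.
Qed.
Lemma linD x y : A (x + y) = A x + A y.
Proof. by have := lin_DZ 1 x y; rewrite !scale1r. Qed.
Lemma linZ c x : A (c *: x) = c *: A x.
Proof. by rewrite -[c *: x]addr0 lin_DZ lin0 addr0. Qed.
Lemma linB x y : A (x - y) = A x - A y.
Proof. by rewrite -scaleN1r -[in RHS]scaleN1r -linZ -linD. Qed.
Lemma lin_sum (J : Type) (s : seq J) (f : J -> H) :
  A (\sum_(j <- s) f j) = \sum_(j <- s) A (f j).
Proof. exact: (big_morph A linD lin0). Qed.

Lemma opbound (h : R) : (Es (fun i => (N (A (e i)) ^+ 2)%R) <= h%:E)%E ->
  forall x, N (A x) <= Num.sqrt h * N x.
Proof.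
move=> hh x; have [M hM] := hA.2.
apply/ler_addgt0Pr => eps e0.
have M1 : 0 < `|M| + 1 by rewrite ltr_wpDl.
have [s [us hs]] := approx x (divr_gt0 e0 M1).
have hx : A x = A (P s x) + A (x - P s x).
  by rewrite -linD; congr A; rewrite addrC subrK.
rewrite hx; apply: le_trans (ND hH _ _) _.
apply: lerD.
- rewrite /P lin_sum; apply: le_trans (N_sum hH _ _) _.
  under eq_bigr do rewrite linZ (NZ hH).
  apply: le_trans (fCS _ _ _) _; rewrite mulrC; apply: ler_pM.
  + exact: sqrtr_ge0.
  + exact: sqrtr_ge0.
  + apply: ler_wsqrtr; rewrite -lee_fin; apply: le_trans hh.
    exact: Es_ge.
  + rewrite -[N x]ger0_norm ?N_ge0 // -sqrtr_sqr; apply: ler_wsqrtr.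
    by have := Bessel hH he x us.
- apply: le_trans (hM _) _.
  have h1 : M * N (x - P s x) <= `|M| * N (x - P s x).
    by rewrite ler_wpM2r ?N_ge0 ?ler_norm.
  apply: le_trans h1 _.
  have h2 : `|M| * N (x - P s x) <= `|M| * (eps / (`|M| + 1)).
    by apply: ler_wpM2l; [exact: normr_ge0 | exact: ltW].
  apply: le_trans h2 _.
  by rewrite mulrA ler_pdivrMr // mulrDr mulr1 mulrC lerDl ltW.
Qed.

Lemma opbound_sqr (h : R) : 0 <= h -> (Es (fun i => (N (A (e i)) ^+ 2)%R) <= h%:E)%E ->
  forall x, N (A x) ^+ 2 <= h * N x ^+ 2.
Proof.
move=> h0 hh x; have := opbound hh x => hx.
have := N_ge0 ip (A x); have := N_ge0 ip x; have := sqrtr_ge0 h.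
have := sqr_sqrtr h0.
move: (Num.sqrt h) (N (A x)) (N x) hx => q u v *; nra.
Qed.

End Lin.

Lemma hs_adj (T Ts : H -> H) : adjoint_of ip T Ts ->
  Es (fun i => N (Ts (e i)) ^+ 2) = Es (fun i => N (T (e i)) ^+ 2).
Proof.
move=> hadj; rewrite /Es.
transitivity (\esum_(i in [set: I]) \esum_(j in [set: I]) (a (T (e j)) i)%:E).
  apply: eq_esum => i _; rewrite -(Parseval hH he); apply: eq_esum => j _.
  by rewrite /Aux.a hadj (ipC hH) cmodJ.
rewrite esum_swap; last by move=> i j; rewrite lee_fin a_ge0.
apply: eq_esum => j _; exact: (Parseval hH he (T (e j))).
Qed.

End Ops.


Lemma Re_aux (R : realType) (z u : R[i]) :
  complex.Re (z * u + conjc (z * u)) =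
  (2 * complex.Re z) * complex.Re u + (- 2 * complex.Im z) * complex.Im u.
Proof. by case: z => p q; case: u => x y /=; ring. Qed.
Lemma Im_aux (R : realType) (z u : R[i]) :
  complex.Im (z * u + conjc (z * u)) = 0.
Proof. by case: z => p q; case: u => x y /=; ring. Qed.

Section Main.
Variable R : realType.
Local Notation C := (R[i]).
Variable H : lmodType C.
Variable ip : H -> H -> C.
Hypothesis hH : is_hilbert ip.
Local Notation N := (hnorm ip).
Variable I : choiceType.
Variable e : I -> H.
Hypothesis he : orthonormal_basis ip e.

Lemma sum_le_of_Es (f : I -> R) (s : seq I) (B : R) : uniq s ->
  (Es f <= B%:E)%E -> \sum_(i <- s) f i <= B.
Proof. by move=> us hB; rewrite -lee_fin; apply: le_trans hB; apply: Es_ge. Qed.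

Lemma Es_prod_le (f g : I -> R) (A B : R) : (forall i, 0 <= f i) -> (forall i, 0 <= g i) ->
  (Es (fun i => (f i ^+ 2)%R) <= A%:E)%E -> (Es (fun i => (g i ^+ 2)%R) <= B%:E)%E ->
  (Es (fun i => (f i * g i)%R) <= (Num.sqrt A * Num.sqrt B)%:E)%E.
Proof.
move=> f0 g0 hA hB; apply: Es_le => s us.
apply: le_trans (fCS _ _ _) _; apply: ler_pM; rewrite ?sqrtr_ge0 //.
- by apply: ler_wsqrtr; apply: sum_le_of_Es hA.
- by apply: ler_wsqrtr; apply: sum_le_of_Es hB.
Qed.

Lemma HS_fin (A : H -> H) : is_HS ip e A ->
  Es (fun i => N (A (e i)) ^+ 2) = (fine (hs_sum2 ip e A))%:E.
Proof.
rewrite /is_HS => h; rewrite fineK // ge0_fin_numE //.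
by apply: Es_ge0 => i; apply: sqr_ge0.
Qed.

Lemma hs_sum2_ge0 (A : H -> H) : 0 <= fine (hs_sum2 ip e A).
Proof. by apply: fine_ge0; apply: Es_ge0 => i; apply: sqr_ge0. Qed.

Lemma hs_norm_sqr (A : H -> H) : hs_norm ip e A ^+ 2 = fine (hs_sum2 ip e A).
Proof. by rewrite /hs_norm sqr_sqrtr // hs_sum2_ge0. Qed.

Lemma hs_norm_le (A : H -> H) (B : R) : 0 <= B ->
  (Es (fun i => (N (A (e i)) ^+ 2)%R) <= (B ^+ 2)%:E)%E -> hs_norm ip e A <= B.
Proof.
move=> B0 h; rewrite /hs_norm -(ger0_norm B0) -sqrtr_sqr; apply: ler_wsqrtr.
by apply: fine_Es_le h => i; apply: sqr_ge0.
Qed.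

Lemma eq_csum (f g : I -> C) : (forall i, f i = g i) -> csum f = csum g.
Proof. by move=> fg; congr csum; apply: funext. Qed.

Variables T Ts S : H -> H.
Hypothesis hT : bounded_linear ip T.
Hypothesis hTs : bounded_linear ip Ts.
Hypothesis hadj : adjoint_of ip T Ts.
Hypothesis hS : bounded_linear ip S.
Hypothesis hT2 : is_HS ip e T.
Hypothesis hS2 : is_HS ip e S.

Let tT := fine (hs_sum2 ip e T).
Let tS := fine (hs_sum2 ip e S).
Let tT0 : 0 <= tT := hs_sum2_ge0 T.
Let tS0 : 0 <= tS := hs_sum2_ge0 S.

Let ET : Es (fun i => N (T (e i)) ^+ 2) = tT%:E := HS_fin hT2.
Let ES : Es (fun i => N (S (e i)) ^+ 2) = tS%:E := HS_fin hS2.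
Let ETs : Es (fun i => N (Ts (e i)) ^+ 2) = tT%:E.
Proof. by rewrite (hs_adj hH he hadj) ET. Qed.

Let leT : (Es (fun i => (N (T (e i)) ^+ 2)%R) <= tT%:E)%E.
Proof. by rewrite ET. Qed.
Let leTs : (Es (fun i => (N (Ts (e i)) ^+ 2)%R) <= tT%:E)%E.
Proof. by rewrite ETs. Qed.
Let leS : (Es (fun i => (N (S (e i)) ^+ 2)%R) <= tS%:E)%E.
Proof. by rewrite ES. Qed.

Lemma comp_bound (A B : H -> H) (a b : R) : bounded_linear ip A -> 0 <= a -> 0 <= b ->
  (Es (fun i => (N (A (e i)) ^+ 2)%R) <= a%:E)%E ->
  (Es (fun i => (N (B (e i)) ^+ 2)%R) <= b%:E)%E ->
  (Es (fun i => (N (A (B (e i))) ^+ 2)%R) <= (a * b)%:E)%E.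
Proof.
move=> hA a0 b0 ha hb; apply: Es_le => s us.
apply: le_trans (_ : \sum_(i <- s) a * N (B (e i)) ^+ 2 <= _).
  by apply: ler_sum => i _; apply: (opbound_sqr hH he hA a0 ha).
by rewrite -mulr_sumr ler_wpM2l // (sum_le_of_Es us hb).
Qed.

Lemma part1_norm : hs_norm ip e (fun x => T (Ts x) + Ts (T x)) <= 2 * tT.
Proof.
apply: hs_norm_le; first by rewrite mulr_ge0.
have h1 := comp_bound hT tT0 tT0 leT leTs.
have h2 := comp_bound hTs tT0 tT0 leTs leT.
apply: Es_le => s us.
set f := fun i => N (T (Ts (e i))); set g := fun i => N (Ts (T (e i))).
have hA := sum_le_of_Es us h1; have hB := sum_le_of_Es us h2.
apply: le_trans (_ : \sum_(i <- s) (f i ^+ 2 + g i ^+ 2 + 2 * (f i * g i)) <= _).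
  apply: ler_sum => i _.
  have := ND hH (T (Ts (e i))) (Ts (T (e i))); rewrite -/(f i) -/(g i).
  have := N_ge0 ip (T (Ts (e i)) + Ts (T (e i))).
  have := N_ge0 ip (T (Ts (e i))); have := N_ge0 ip (Ts (T (e i))).
  rewrite -/(f i) -/(g i).
  move: (N _) (f i) (g i) => n p q *; nra.
rewrite big_split big_split /= -mulr_sumr.
have hC := fCS s f g.
set A := \sum_(i <- s) f i ^+ 2 in hA hC *; set B := \sum_(i <- s) g i ^+ 2 in hB hC *.
have A0 : 0 <= A by apply: sumr_ge0 => i _; apply: sqr_ge0.
have B0 : 0 <= B by apply: sumr_ge0 => i _; apply: sqr_ge0.
have sA : Num.sqrt A <= tT.
  by rewrite -(ger0_norm tT0) -sqrtr_sqr ler_wsqrtr // expr2.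
have sB : Num.sqrt B <= tT.
  by rewrite -(ger0_norm tT0) -sqrtr_sqr ler_wsqrtr // expr2.
have qA := sqr_sqrtr A0; have qB := sqr_sqrtr B0.
have := sqrtr_ge0 A; have := sqrtr_ge0 B.
move: hC; set Cc := \sum_(i <- s) f i * g i.
move: (Num.sqrt A) (Num.sqrt B) sA sB qA qB => x y *; nra.
Qed.

Let t i := ip (T (T (e i))) (e i).
Lemma t_adj i : t i = ip (T (e i)) (Ts (e i)).
Proof. by rewrite /t hadj. Qed.

Lemma t_summable : (Es (fun i => `|complex.Re (t i)|%R) <= tT%:E)%E /\
                   (Es (fun i => `|complex.Im (t i)|%R) <= tT%:E)%E.
Proof.
have hP := Es_prod_le (fun i => N_ge0 ip (T (e i))) (fun i => N_ge0 ip (Ts (e i))) leT leTs.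
rewrite -expr2 sqr_sqrtr // in hP.
have hc i : cmod (t i) <= N (T (e i)) * N (Ts (e i)) by rewrite t_adj CS.
split.
- apply: (Es_mono (g := fun i => N (T (e i)) * N (Ts (e i)))) hP => [i|i].
    exact: normr_ge0.
  exact: le_trans (absRe_le_cmod _) (hc i).
- apply: (Es_mono (g := fun i => N (T (e i)) * N (Ts (e i)))) hP => [i|i].
    exact: normr_ge0.
  exact: le_trans (absIm_le_cmod _) (hc i).
Qed.

Lemma trace_T2 : trace ip e (fun x => T (T x)) = csum t.
Proof. by []. Qed.

Lemma trace_phi phi :
  cmod (trace ip e (fun x => expi phi *: T (expi phi *: T x)
                 + expi (- phi) *: Ts (expi (- phi) *: Ts x)))
  <= 2 * cmod (trace ip e (fun x => T (T x))).
Proof.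
have wJ : expi (- phi) = conjc (expi phi) by rewrite /expi cosN sinN.
rewrite wJ; set w := expi phi; set W := w * w.
have E : trace ip e (fun x => w *: T (w *: T x) + conjc w *: Ts (conjc w *: Ts x))
       = csum (fun i => W * t i + conjc (W * t i)).
  rewrite /trace; apply: eq_csum => i.
  rewrite (ipDl hH) !(linZ hT) !(linZ hTs) !(ipZl hH) !mulrA conjcM -/W.
  congr (_ + _); congr (_ * _).
  - by rewrite conjcM.
  - by rewrite (ipC hH (e i) (Ts (Ts (e i)))) -hadj -hadj.
rewrite E trace_T2 /csum.
have ER : (fun i => complex.Re (W * t i + conjc (W * t i))) =
          (fun i => (2 * complex.Re W) * complex.Re (t i) + (- 2 * complex.Im W) * complex.Im (t i)).
  by apply: funext => i; apply: Re_aux.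
have EI : (fun i => complex.Im (W * t i + conjc (W * t i))) = (fun _ => 0).
  by apply: funext => i; apply: Im_aux.
rewrite ER EI rsum0.
have [s1 s2] := t_summable.
rewrite (rsum_lin _ _ s1 s2).
set X := rsum _; set Y := rsum _.
have pq : complex.Re W ^+ 2 + complex.Im W ^+ 2 = 1.
  rewrite /W /w /expi /=.
  have := cos2Dsin2 phi; move: (cos phi) (sin phi) => c s h.
  rewrite -(expr1n _ 2) -h; ring.
clearbody X Y.
move: (complex.Re W) (complex.Im W) pq => p q pq.
rewrite /cmod /= expr0n /= addr0 sqrtr_sqr.
apply: sqr_le; first by rewrite mulr_ge0 // sqrtr_ge0.
rewrite exprMn sqr_sqrtr ?addr_ge0 ?sqr_ge0 // real_normK ?num_real //.
have := sqr_ge0 (p * Y + q * X); nra.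
Qed.

Lemma part1_sup :
  sup [set cmod (trace ip e (fun x =>
                 expi phi *: T (expi phi *: T x)
                 + expi (- phi) *: Ts (expi (- phi) *: Ts x)))
           | phi in [set: R]]
  <= 2 * cmod (trace ip e (fun x => T (T x))).
Proof.
apply: ge_sup.
  by eexists; exists 0.
by move=> _ [phi _ <-]; apply: trace_phi.
Qed.

Let tTS := fine (hs_sum2 ip e (fun x => T (S x))).
Let leTS : (Es (fun i => (N (T (S (e i))) ^+ 2)%R) <= (tT * tS)%:E)%E :=
  comp_bound hT tT0 tS0 leT leS.

Lemma tTS_le : hs_norm ip e (fun x => T (S x)) ^+ 2 <= tT * tS.
Proof. by rewrite hs_norm_sqr; apply: fine_Es_le leTS => i; apply: sqr_ge0. Qed.

Let t2 i := ip (T (S (T (S (e i))))) (e i).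

Lemma t2_bound : (Es (fun i => cmod (t2 i)) <= (tT * tS)%:E)%E.
Proof.
have hP := Es_prod_le (fun i => N_ge0 ip (T (S (e i)))) (fun i => N_ge0 ip (Ts (e i))) leTS leTs.
rewrite sqrtrM // mulrAC -expr2 sqr_sqrtr // in hP.
have hc i : cmod (t2 i) <= Num.sqrt tS * (N (T (S (e i))) * N (Ts (e i))).
  rewrite /t2 hadj; apply: le_trans (CS hH _ _) _.
  rewrite mulrA ler_wpM2r ?N_ge0 //.
  exact: (opbound hH he hS leS).
apply: (Es_mono (g := fun i => Num.sqrt tS * (N (T (S (e i))) * N (Ts (e i))))) => [i|i|].
- exact: cmod_ge0.
- exact: hc.
rewrite (EsZ (sqrtr_ge0 tS) _ hP); last by move=> i; rewrite mulr_ge0 ?N_ge0.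
rewrite lee_fin.
have hf := fine_Es_le (fun i => mulr_ge0 (N_ge0 ip (T (S (e i)))) (N_ge0 ip (Ts (e i)))) hP.
apply: le_trans (ler_wpM2l (sqrtr_ge0 tS) hf) _.
by rewrite mulrCA -expr2 sqr_sqrtr.
Qed.

Lemma part2_trace : cmod (trace ip e (fun x => T (S (T (S x))))) <= 2 * (tT * tS).
Proof.
rewrite /trace /csum.
apply: le_trans (cmod_le_ReIm _) _ => /=.
have hRe : (Es (fun i => `|complex.Re (t2 i)|%R) <= (tT * tS)%:E)%E.
  apply: (Es_mono (g := fun i => cmod (t2 i))) t2_bound => [i|i].
  - exact: normr_ge0.
  - exact: absRe_le_cmod.
have hIm : (Es (fun i => `|complex.Im (t2 i)|%R) <= (tT * tS)%:E)%E.
  apply: (Es_mono (g := fun i => cmod (t2 i))) t2_bound => [i|i].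
  - exact: normr_ge0.
  - exact: absIm_le_cmod.
have := rsum_bound hRe; have := rsum_bound hIm.
move: (`|_|) (`|_|) (tT * tS) => u v w; lra.
Qed.

End Main.

End Aux.
Import Aux.

Theorem corollary3p7 (R : realType) (H : lmodType R[i]) (ip : H -> H -> R[i])
  (hH : is_hilbert ip)
  (I : choiceType) (e : I -> H) (he : orthonormal_basis ip e)
  (T Ts S : H -> H)
  (hT : bounded_linear ip T) (hTs : bounded_linear ip Ts) (hadj : adjoint_of ip T Ts)
  (hS : bounded_linear ip S)
  (hT2 : is_HS ip e T) (hS2 : is_HS ip e S) :
  (hs_norm ip e (fun x => T (Ts x) + Ts (T x))
     + sup [set cmod (trace ip e (fun x =>
                 expi phi *: T (expi phi *: T x)
                 + expi (- phi) *: Ts (expi (- phi) *: Ts x)))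
           | phi in [set: R]]
   <= 2 * (hs_norm ip e T ^+ 2 + cmod (trace ip e (fun x => T (T x)))))
  /\
  (hs_norm ip e (fun x => T (S x)) ^+ 2
     + cmod (trace ip e (fun x => T (S (T (S x)))))
   <= 4 * Num.min
            (hs_norm ip e T ^+ 2 * (hs_norm ip e S ^+ 2 + cmod (trace ip e (fun x => S (S x)))))
            (hs_norm ip e S ^+ 2 * (hs_norm ip e T ^+ 2 + cmod (trace ip e (fun x => T (T x)))))).
Proof.
have tT0 := hs_sum2_ge0 ip e T; have tS0 := hs_sum2_ge0 ip e S.
rewrite !hs_norm_sqr.
split.
  have h1 := part1_norm hH he hT hTs hadj hT2.
  have h2 := part1_sup hH he hT hTs hadj hT2.
  rewrite mulrDr; exact: lerD h1 h2.
have h1 := tTS_le hH he hT hT2 hS2.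
rewrite hs_norm_sqr in h1.
have h2 := part2_trace hH he hT hadj hS hT2 hS2.
have c1 := cmod_ge0 (trace ip e (fun x => S (S x))).
have c2 := cmod_ge0 (trace ip e (fun x => T (T x))).
move: (fine _) (fine _) (fine _) (cmod _) (cmod _) (cmod _) tT0 tS0 h1 h2 c1 c2.
move=> a b c d f g tT0' tS0' h1' h2' c1' c2'.
have m : c * b <= Num.min (c * (b + f)) (b * (c + d)).
  rewrite le_min; apply/andP; split; nra.
have cb0 : 0 <= c * b by rewrite mulr_ge0.
move: m; move: (Num.min _ _) (c * b) h1' h2' cb0 => M p *; lra.
Qed.
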